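(* Let $T=(V,E)$ be a finite undirected tree, let $\mathcal{O}$ be a nonempty proper subset of $V$, and consider the infection model described in the context. Let $R\subset[\mathcal{O}]$ be a star arrangement of classes and $\partial R:=\bigcup_{r\in R}\partial r$. If $s\in\bigcup_{r\in R}r$, then the statistic $(\tau_o)_{o\in\partial R}$ is sufficient for $s$; that is, as the source $s$ ranges over $\bigcup_{r\in R}r$, the conditional distribution of the full observer vector $(\tau_o)_{o\in\mathcal{O}}$ given $(\tau_o)_{o\in\partial R}$ does not depend on $s$.
   Context: Infection model: an infection starts at time $0$ at a single unknown node $s\in V$ (the source). For each edge $e\in E$ there is a nonnegative random delay $\tau_e$ with a continuous distribution of known law, and the $\tau_e$, $e\in E$, are independent. For $u,v\in V$, $[u,v]$ denotes the set of edges (or vertices) of the unique path in $T$ between $u$ and $v$. The infection time of $v$ is $\tau_v:=\sum_{e\in[s,v]}\tau_e$. The observers are the nodes of $\mathcal{O}$. Equivalence classes: for $u,v\in V\setminus\mathcal{O}$, $u\equiv v$ iff $[u,v]\cap\mathcal{O}=\emptyset$ (vertex sets); $[\mathcal{O}]$ is the set of classes. For $r\in[\mathcal{O}]$, $\partial r$ is the set of observers adjacent to some node of $r$. A set $R\subset[\mathcal{O}]$ is a star arrangement if $\bigcap_{r\in R}\partial r\neq\emptyset$. *)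

(* Defs.v *)
From HB Require Import structures.
From mathcomp Require Import all_boot all_order all_algebra.
From mathcomp Require Import all_classical all_reals.
From mathcomp Require Import measure lebesgue_measure lebesgue_integral probability kernel.

Set Implicit Arguments.
Unset Strict Implicit.
Unset Printing Implicit Defensive.

Import Order.TTheory GRing.Theory Num.Theory.
Local Open Scope ring_scope.

Section Tree.
Variables (V : finType) (adj : rel V).

Definition spath (u v : V) (p : seq V) : bool :=
  [&& path adj u p, uniq (u :: p) & last u p == v].

Definition is_tree : Prop :=
  symmetric adj /\ irreflexive adj /\
  forall u v : V, exists p, spath u v p /\ forall q, spath u v q -> q = p.

Definition is_edge (e : {set V}) : bool :=
  [exists x, exists y, adj x y && (e == [set x; y])].
Definition edge := {e : {set V} | is_edge e}.

(* The (vertex sequence, minus the start) of the unique path from u to v. *)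
Definition tpath (u v : V) : seq V := xget [::] [set p | spath u v p].

Definition pverts (u v : V) : {set V} := [set x in u :: tpath u v].

Definition pedges (u v : V) : {set edge} :=
  [set e : edge | val e \in [seq [set xy.1; xy.2] | xy <- zip (u :: tpath u v) (tpath u v)]].

Variable O : {set V}.

Definition oequiv (u v : V) : bool :=
  [&& u \notin O, v \notin O & [disjoint pverts u v & O]].

Definition is_class (r : {set V}) : Prop :=
  exists2 u, u \notin O & r = [set v | oequiv u v].

Definition bdry (r : {set V}) : {set V} :=
  [set o in O | [exists x in r, adj o x]].

Definition star_arrangement (Rs : {set {set V}}) : Prop :=
  \bigcap_(r in Rs) bdry r != finset.set0.

Definition bdryR (Rs : {set {set V}}) : {set V} := \bigcup_(r in Rs) bdry r.
Definition unionR (Rs : {set {set V}}) : {set V} := \bigcup_(r in Rs) r.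
End Tree.

Local Open Scope classical_set_scope.

Definition rvec (R : realType) (I : Type) := I -> R.
HB.instance Definition _ (R : realType) (I : Type) :=
  Choice.on (rvec R I).
HB.instance Definition _ (R : realType) (I : Type) :=
  isPointed.Build (rvec R I) (fun _ => 0).

Definition coord_gen (R : realType) (I : Type) : set (set (rvec R I)) :=
  [set A | exists i : I, exists2 B : set R, measurable B & A = (fun f : rvec R I => f i) @^-1` B].

Definition vecspace (R : realType) (I : Type) := g_sigma_algebraType (@coord_gen R I).

Section Infection.
Context {R : realType} {d : measure_display} {Omega : measurableType d}
        (P : probability Omega R).
Context {V : finType} {adj : rel V}.

Definition indep_delays (tau : edge adj -> Omega -> R) : Prop :=
  forall B : edge adj -> set R, (forall e, measurable (B e)) ->
    P (\bigcap_(e in [set: edge adj]) (tau e @^-1` B e)) =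
    (\prod_(e : edge adj) P (tau e @^-1` B e))%E.

Definition inf_time (tau : edge adj -> Omega -> R) (s v : V) (w : Omega) : R :=
  \sum_(e in pedges adj s v) tau e w.

Definition obs_vec (tau : edge adj -> Omega -> R) (s : V) (S : {set V})
  (w : Omega) : {o : V | o \in S} -> R :=
  fun o => inf_time tau s (val o) w.

(* Sufficiency of a statistic Y_s for the parameter s ranging over Theta,
   for the data X_s: there is a common (s-independent) version K of the
   conditional distribution of X_s given Y_s, i.e. a probability kernel K
   with  P(X_s in A, Y_s in B) = int_{Y_s in B} K(Y_s, A) dP  for every s in
   Theta and all measurable A, B. *)
Definition sufficient (Th : Type) (Theta : set Th) (I J : Type)
  (X : Th -> Omega -> (I -> R)) (Y : Th -> Omega -> (J -> R)) : Prop :=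
  exists K : R.-pker (vecspace R J) ~> (vecspace R I),
    forall s, Theta s ->
    forall (A : set (vecspace R I)) (B : set (vecspace R J)),
      measurable A -> measurable B ->
      P (X s @^-1` A `&` Y s @^-1` B) =
      (\int[P]_(w in Y s @^-1` B) K (Y s w : vecspace R J) A)%E.
End Infection.
Arguments obs_vec {R d Omega V adj} tau s S w _.

(* Main.v *)
Require Import Defs.
From HB Require Import structures.
From mathcomp Require Import all_boot all_order all_algebra.
From mathcomp Require Import all_classical all_reals.
From mathcomp Require Import measure lebesgue_measure lebesgue_integral probability kernel.
From mathcomp Require Import measurable_realfun.
Import Order.TTheory GRing.Theory Num.Theory.
Set Implicit Arguments.
Unset Strict Implicit.
Unset Printing Implicit Defensive.

Section Graph.
Variables (V : finType) (adj : rel V).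
Hypothesis tree : is_tree adj.

Lemma adj_sym : symmetric adj.
Proof. by case: tree. Qed.

Lemma tpathP u v : spath adj u v (tpath adj u v).
Proof.
have [_ [_ ex]] := tree; have [p [sp _]] := ex u v.
exact: (xgetPex [::] (P := [set p | spath adj u v p]) (ex_intro _ p sp)).
Qed.

Lemma tpath_uniq u v q : spath adj u v q -> q = tpath adj u v.
Proof.
have [_ [_ ex]] := tree; have [p [sp uq]] := ex u v.
by move=> h; rewrite (uq q h) (uq _ (tpathP u v)).
Qed.



Lemma tpath_refl u : tpath adj u u = [::].
Proof. by rewrite -(@tpath_uniq u u [::]) // /spath /= eqxx. Qed.

Lemma in_pverts u v x : (x \in pverts adj u v) = (x \in u :: tpath adj u v).
Proof. by rewrite /pverts inE. Qed.

Lemma walk_sub u w : path adj u w ->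
  forall x, x \in pverts adj u (last u w) -> x \in u :: w.
Proof.
move=> hw; case: (shortenP hw) => p' pp' up' sub x.
have sp : spath adj u (last u p') p' by rewrite /spath pp' up' eqxx.
rewrite in_pverts -(tpath_uniq sp) !inE => /orP[->//|/sub ->]; by rewrite orbT.
Qed.

Lemma pverts_tri a b c :
  pverts adj a c \subset pverts adj a b :|: pverts adj b c.
Proof.
have [pab uab lab] := and3P (tpathP a b).
have [pbc ubc lbc] := and3P (tpathP b c).
have hw : path adj a (tpath adj a b ++ tpath adj b c).
  by rewrite cat_path pab (eqP lab) pbc.
have hl : last a (tpath adj a b ++ tpath adj b c) = c.
  by rewrite last_cat (eqP lab) (eqP lbc).
apply/fintype.subsetP => x; rewrite -{1}hl => /(walk_sub hw).
rewrite -cat_cons mem_cat finset.in_setU !in_pverts => /orP[->//|xbc].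
by rewrite orbC !inE xbc orbT.
Qed.

Lemma pverts_sym u v : pverts adj v u \subset pverts adj u v.
Proof.
have [p uv l] := and3P (tpathP u v).
set t := tpath adj u v in p uv l *.
have hw : path adj v (rev (belast u t)).
  rewrite -(eqP l) rev_path.
  by rewrite (_ : (fun z => adj^~ z) = adj) //; apply/funext=> x; apply/funext=> y; rewrite adj_sym.
have hl : last v (rev (belast u t)) = u.
  case: t {p uv hw} l => [/= /eqP <- //| a t _] /=.
  by rewrite rev_cons last_rcons.
apply/fintype.subsetP => x; rewrite -{1}hl => /(walk_sub hw).
rewrite in_pverts inE mem_rev => /orP[/eqP ->|/mem_belast //].
by rewrite -[X in X \in _](eqP l) mem_last.
Qed.

Lemma pverts_symE u v : pverts adj u v = pverts adj v u.
Proof. by apply/eqP; rewrite finset.eqEsubset !pverts_sym. Qed.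

Lemma pverts_prefix u v w : w \in pverts adj u v ->
  pverts adj u w \subset pverts adj u v.
Proof.
rewrite in_pverts => hw; apply/fintype.subsetP => x; rewrite [x \in pverts adj u v]in_pverts.
have := tpathP u v; case/splitPl: hw => p1 p2 lp1 /and3P[pp _ _].
rewrite cat_path in pp; case/andP: pp => pp1 _.
rewrite -lp1 => /(walk_sub pp1).
by rewrite -cat_cons mem_cat => ->.
Qed.

Lemma pverts_adj a b : adj a b -> pverts adj a b \subset [set a; b].
Proof.
move=> ab; have hw : path adj a [:: b] by rewrite /= ab.
apply/fintype.subsetP => x; rewrite -[X in pverts adj a X]/(last a [:: b]).
by move/(walk_sub hw); rewrite !inE.
Qed.

Lemma pverts_refl u : pverts adj u u = [set u].
Proof. by apply/setP => x; rewrite in_pverts tpath_refl !inE. Qed.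

Lemma tpath_cat s p o t1 t2 : spath adj s p t1 -> spath adj p o t2 ->
  uniq (s :: t1 ++ t2) -> tpath adj s o = t1 ++ t2.
Proof.
move=> /and3P[p1 _ l1] /and3P[p2 _ l2] u12; apply/esym/tpath_uniq.
by rewrite /spath cat_path p1 (eqP l1) p2 u12 last_cat (eqP l1) l2.
Qed.

End Graph.

Section Struct.
Variables (V : finType) (adj : rel V) (O : {set V}) (Rs : {set {set V}}).
Hypothesis tree : is_tree adj.
Hypothesis hcls : forall r, r \in Rs -> is_class adj O r.

Definition Hs := unionR Rs :|: bdryR adj O Rs.

Lemma class_mem r v : r \in Rs -> v \in r -> v \notin O.
Proof.
move=> /hcls [u uO ->]; rewrite inE => /and3P[]//.
Qed.

Lemma class_path r u v : u \notin O -> r = [set v | oequiv adj O u v] ->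
  v \in r -> pverts adj u v \subset r.
Proof.
move=> uO -> ; rewrite inE => /and3P[_ vO dis]; apply/fintype.subsetP => w hw.
rewrite inE /oequiv uO (disjointFr dis hw) /=.
exact: disjointWl (pverts_prefix tree hw) dis.
Qed.

Lemma class_self r u : u \notin O -> r = [set v | oequiv adj O u v] -> u \in r.
Proof. by move=> uO ->; rewrite inE /oequiv uO pverts_refl // disjoints1 uO. Qed.

Lemma bdry_path r u o : u \notin O -> r = [set v | oequiv adj O u v] ->
  o \in bdry adj O r -> pverts adj u o \subset r :|: [set o].
Proof.
move=> uO er; rewrite inE => /andP[_ /existsP[x /andP[xr ox]]].
apply/fintype.subsetP => w /(fintype.subsetP (pverts_tri tree u x o)).
rewrite !finset.in_setU => /orP[/(fintype.subsetP (class_path uO er xr)) ->//|].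
rewrite adj_sym // in ox.
move=> /(fintype.subsetP (pverts_adj tree ox)); rewrite !inE => /orP[/eqP->|->].
  by rewrite xr.
by rewrite orbT.
Qed.

Lemma unionR_sub r : r \in Rs -> r \subset Hs.
Proof.
move=> rR; apply/fintype.subsetP => x xr; rewrite finset.in_setU.
by apply/orP; left; apply/bigcupP; exists r.
Qed.

Lemma bdryR_sub r : r \in Rs -> bdry adj O r \subset Hs.
Proof.
move=> rR; apply/fintype.subsetP => x xr; rewrite finset.in_setU.
by apply/orP; right; apply/bigcupP; exists r.
Qed.

Variable ostar : V.
Hypothesis hostar : ostar \in \bigcap_(r in Rs) bdry adj O r.

Lemma Hs_anchor h : h \in Hs -> exists u,
  pverts adj u h \subset Hs /\ pverts adj u ostar \subset Hs.
Proof.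
have aux r u : r \in Rs -> u \notin O -> r = [set v | oequiv adj O u v] ->
    pverts adj u ostar \subset Hs.
  move=> rR uO er; apply/fintype.subsetP => w.
  have ho : ostar \in bdry adj O r by move/bigcapP: hostar; apply.
  move/(fintype.subsetP (bdry_path uO er ho)); rewrite finset.in_setU => /orP[/(fintype.subsetP (unionR_sub rR))//|].
  by rewrite inE => /eqP ->; apply: (fintype.subsetP (bdryR_sub rR)).
rewrite finset.in_setU => /orP[/bigcupP[r rR hr]|/bigcupP[r rR hr]];
  have [u uO er] := hcls rR; exists u; split; try exact: aux rR uO er.
  exact: fintype.subset_trans (class_path uO er hr) (unionR_sub rR).
apply/fintype.subsetP => w /(fintype.subsetP (bdry_path uO er hr)).
rewrite finset.in_setU => /orP[/(fintype.subsetP (unionR_sub rR))//|].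
by rewrite inE => /eqP ->; apply: (fintype.subsetP (bdryR_sub rR)).
Qed.

Lemma Hs_convex a b : a \in Hs -> b \in Hs -> pverts adj a b \subset Hs.
Proof.
move=> /Hs_anchor [ua [ha1 ha2]] /Hs_anchor [ub [hb1 hb2]].
apply/fintype.subsetP => x /(fintype.subsetP (pverts_tri tree a ua b)).
rewrite finset.in_setU => /orP[|].
  by rewrite (pverts_symE tree) => /(fintype.subsetP ha1).
move/(fintype.subsetP (pverts_tri tree ua ostar b)).
rewrite finset.in_setU => /orP[/(fintype.subsetP ha2)//|].
move/(fintype.subsetP (pverts_tri tree ostar ub b)).
rewrite finset.in_setU => /orP[|/(fintype.subsetP hb1)//].
by rewrite (pverts_symE tree) => /(fintype.subsetP hb2).
Qed.

Lemma class_closed r p c : r \in Rs -> p \in r -> adj p c -> c \in Hs.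
Proof.
move=> rR pr pc; have [u uO er] := hcls rR.
case cO: (c \in O).
  apply: (fintype.subsetP (bdryR_sub rR)); rewrite inE cO /=.
  by apply/existsP; exists p; rewrite pr (adj_sym tree).
apply: (fintype.subsetP (unionR_sub rR)); rewrite er inE /oequiv uO cO /=.
have pO := class_mem rR pr.
have sub := class_path uO er pr.
apply/pred0P => w /=; apply/negbTE/negP => /andP[hw wO].
move: hw => /(fintype.subsetP (pverts_tri tree u p c)); rewrite finset.in_setU => /orP[|].
  move=> /(fintype.subsetP sub); rewrite er inE => /and3P[_ wO' _].
  by rewrite wO in wO'.
move=> /(fintype.subsetP (pverts_adj tree pc)); rewrite !inE => /orP[/eqP eq|/eqP eq];
  subst w; [by rewrite wO in pO|by rewrite wO in cO].
Qed.

Definition Good (o p : V) : bool :=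
  (p \in bdryR adj O Rs) && all (fun v => v \notin Hs) (tpath adj p o).

Definition piv (o : V) : V := odflt o [pick p | Good o p].

Lemma split_last (x : V) t : x \in Hs -> exists p t1 t2,
  [/\ x :: t = t1 ++ p :: t2, p \in Hs & all (fun v => v \notin Hs) t2].
Proof.
move=> xH; elim/last_ind: t => [|t b IH].
  by exists x, [::], [::].
case bH: (b \in Hs).
  by exists b, (x :: t), [::]; rewrite -cats1.
have [p [t1 [t2 [e pH a]]]] := IH.
exists p, t1, (rcons t2 b); split => //.
  by rewrite -cats1 -cat_cons e -catA -cats1.
by rewrite all_rcons bH.
Qed.

Lemma Good_ex o r0 : r0 \in Rs -> o \in O -> exists p, Good o p.
Proof.
move=> r0R oO.
case oB: (o \in bdryR adj O Rs).
  by exists o; rewrite /Good oB tpath_refl.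
have oH : o \notin Hs.
  rewrite finset.in_setU oB orbF; apply/bigcupP => -[r rR or].
  by move: (class_mem rR or); rewrite oO.
have osH : ostar \in Hs.
  apply: (fintype.subsetP (bdryR_sub r0R)); by move/bigcapP: hostar; apply.
have [pt ut lt] := and3P (tpathP tree ostar o).
have [p [t1 [t2 [e pH a]]]] := split_last (tpath adj ostar o) osH.
have sp : spath adj p o t2.
  apply/and3P; split.
  - have : sorted adj (ostar :: tpath adj ostar o) by [].
    by rewrite e sorted_cat_cons => /andP[].
  - by move: ut; rewrite e cat_uniq => /and3P[_ _].
  - by apply/eqP; rewrite -[RHS](eqP lt) -(last_cons ostar ostar) e last_cat.
have tp := tpath_uniq tree sp.
exists p; rewrite /Good -tp a andbT.
move: (pH); rewrite finset.in_setU => /orP[/bigcupP[r rR pr]|//].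
case: t2 {e a} sp tp (a) => [/and3P[_ _ /eqP /= epo] _ _|c t2 /and3P[/= /andP[pc _] _ _] _ /andP[cH _]].
  by subst p; rewrite pH in oH.
by rewrite (class_closed rR pr pc) in cH.
Qed.

Lemma piv_good o r0 : r0 \in Rs -> o \in O -> Good o (piv o).
Proof.
move=> r0R oO; rewrite /piv; case: pickP => [p //|/= h].
by have [p gp] := Good_ex r0R oO; rewrite h in gp.
Qed.

Lemma Good_H o p : Good o p -> p \in Hs.
Proof. by case/andP => pB _; rewrite finset.in_setU pB orbT. Qed.

Lemma tpath_decomp s o p : s \in Hs -> Good o p ->
  tpath adj s o = tpath adj s p ++ tpath adj p o.
Proof.
move=> sH gp; have pH := Good_H gp; case/andP: gp => _ a.
have conv := Hs_convex sH pH.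
have [_ u2 _] := and3P (tpathP tree p o).
apply: (tpath_cat tree (tpathP tree s p) (tpathP tree p o)).
rewrite -cat_cons cat_uniq; have [_ -> _] := and3P (tpathP tree s p).
move: u2; rewrite cons_uniq => /andP[_ ->]; rewrite andbT.
apply/hasPn => y yt; move/allP: a => /(_ y yt) yH.
apply/negP => ys; move: yH; rewrite (fintype.subsetP conv) //.
by rewrite in_pverts.
Qed.

Definition eseq (u : V) (t : seq V) : seq {set V} :=
  [seq [set xy.1; xy.2] | xy <- zip (u :: t) t].

Lemma eseq_cat u t1 t2 : eseq u (t1 ++ t2) = eseq u t1 ++ eseq (last u t1) t2.
Proof. by elim: t1 u => [|a t1 IH] u //=; rewrite -IH. Qed.

Lemma eseq_sub u t x : x \in eseq u t -> x \subset [set y in u :: t].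
Proof.
elim: t u => [|a t IH] u //=; rewrite inE => /orP[/eqP ->|/IH sub].
  by apply/fintype.subsetP => y; rewrite !inE => /orP[->|->]; rewrite ?orbT.
apply/fintype.subsetP => y /(fintype.subsetP sub); rewrite !inE => ->.
by rewrite !orbT.
Qed.

Lemma eseq_out p t x : all (fun v => v \notin Hs) t -> x \in eseq p t ->
  ~~ (x \subset Hs).
Proof.
elim: t p => [|a t IH] p //= /andP[aH al]; rewrite inE => /orP[/eqP ->|/(IH _ al)//].
apply/negP => /fintype.subsetP /(_ a); rewrite in_set2 eqxx orbT => /(_ isT) aH2.
by rewrite aH2 in aH.

Qed.

Definition E1 : {set edge adj} := [set e : edge adj | val e \subset Hs].

Lemma pedges_in s o : s \in Hs -> o \in Hs -> pedges adj s o \subset E1.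
Proof.
move=> sH oH; apply/fintype.subsetP => e; rewrite !inE => /eseq_sub sub.
apply: fintype.subset_trans sub _; exact: Hs_convex sH oH.
Qed.

Lemma pedges_out p o : Good o p -> [disjoint pedges adj p o & E1].
Proof.
case/andP => _ a; rewrite disjoint_sym; apply/pred0P => e /=.
apply/negbTE/negP => /andP[]; rewrite !inE => eH /(eseq_out a).
by rewrite eH.
Qed.

Lemma pedges_decomp s o p : s \in Hs -> Good o p ->
  pedges adj s o = pedges adj s p :|: pedges adj p o.
Proof.
move=> sH gp; apply/setP => e; rewrite finset.in_setU.
have E u v : (e \in pedges adj u v) = (val e \in eseq u (tpath adj u v)) by rewrite inE.
rewrite !E.
have [_ _ /eqP l] := and3P (tpathP tree s p).
by rewrite (tpath_decomp sH gp) eseq_cat mem_cat l.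
Qed.

End Struct.

Local Open Scope classical_set_scope.
Local Open Scope ring_scope.

Section Vec.
Variable R : realType.

Lemma coord_mfun (I : Type) (i : I) :
  measurable_fun setT (fun z : vecspace R I => z i).
Proof.
move=> _ B mB; rewrite setTI; apply: sub_sigma_algebra; exists i; exists B => //.
Qed.

Lemma vec_mfun d (T : measurableType d) (I : Type) (f : T -> vecspace R I) :
  (forall i, measurable_fun setT (fun t => f t i)) -> measurable_fun setT f.
Proof.
move=> mf.
have h := @measurability _ _ T (vecspace R I) setT f (@coord_gen R I).
apply: h => //.
move=> _ [_ [i [B mB ->]] <-].
exact: (mf i measurableT B mB).
Qed.

Lemma msum d (T : measurableType d) (E : finType) (A : {set E}) (h : E -> T -> R) :
  (forall e, measurable_fun setT (h e)) ->
  measurable_fun setT (fun t => \sum_(e in A) h e t).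
Proof.
move=> mh; rewrite (_ : (fun t => _) = (fun t => \sum_(e <- enum A) h e t)).
  exact: measurable_sum.
by apply/funext => t; rewrite big_enum.
Qed.
End Vec.

Section Main.
Variables (R : realType) (d : measure_display) (Omega : measurableType d)
  (P : probability Omega R) (V : finType) (adj : rel V) (O : {set V})
  (tau : edge adj -> Omega -> R) (Rs : {set {set V}}).
Hypothesis mtau : forall e, measurable_fun setT (tau e).

Notation E := (edge adj).
Notation J := {o : V | o \in bdryR adj O Rs}.
Notation II := {o : V | o \in O}.

Definition Zf (w : Omega) : vecspace R E := fun e => tau e w.
Lemma mZ : measurable_fun setT Zf.
Proof. by apply: vec_mfun => e; exact: mtau. Qed.
HB.instance Definition _ := isMeasurableFun.Build _ _ _ _ Zf mZ.
Definition mu := distribution P Zf.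

Definition Ff (y : vecspace R J) (z : vecspace R E) : vecspace R II := fun i =>
  ((if (insub (piv adj O Rs (val i)) : option J) is Some j then y j else 0) +
   \sum_(e in pedges adj (piv adj O Rs (val i)) (val i)) z e)%R.

Lemma mFf_pair : measurable_fun setT (fun yz : vecspace R J * vecspace R E => Ff yz.1 yz.2).
Proof.
apply: vec_mfun => i /=; apply: measurable_funD.
  case: insub => [j|]; last exact: measurable_cst.
  exact: measurableT_comp (coord_mfun j) measurable_fst.
by apply: msum => e; exact: measurableT_comp (coord_mfun e) measurable_snd.
Qed.

Lemma mFf y : measurable_fun setT (Ff y).
Proof.
apply: vec_mfun => i /=; apply: measurable_funD; first exact: measurable_cst.
by apply: msum => e; exact: coord_mfun.
Qed.
HB.instance Definition _ y := isMeasurableFun.Build _ _ _ _ (Ff y) (mFf y).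

Definition Kf : vecspace R J -> {measure set vecspace R II -> \bar R} :=
  fun y => distribution mu (Ff y).

Local Open Scope ereal_scope.

Lemma Kf_meas U : measurable U -> measurable_fun setT (fun y => Kf y U).
Proof.
move=> mU.
set C := (fun yz : vecspace R J * vecspace R E => Ff yz.1 yz.2) @^-1` U.
have mC : measurable C by have := mFf_pair measurableT mU; rewrite setTI.
have := measurable_fun_xsection mu mC.
congr measurable_fun; apply/funext => y /=.
rewrite /Kf /distribution /pushforward; congr (mu _).
by apply/seteqP; split => z; rewrite /xsection /C /= in_setE.
Qed.

HB.instance Definition _ := isKernel.Build _ _ _ _ _ Kf Kf_meas.

Lemma Kf1 y : Kf y setT = 1.
Proof. exact: probability_setT. Qed.

HB.instance Definition _ := Kernel_isProbability.Build _ _ _ _ _ Kf Kf1.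


Definition merge (zz : vecspace R E * vecspace R E) : vecspace R E :=
  fun e => if e \in E1 adj O Rs then zz.1 e else zz.2 e.

Lemma mmerge : measurable_fun setT merge.
Proof.
apply: vec_mfun => e /=; rewrite /merge; case: (e \in E1 adj O Rs).
  exact: measurableT_comp (coord_mfun e) measurable_fst.
exact: measurableT_comp (coord_mfun e) measurable_snd.
Qed.

Definition pm : {measure set vecspace R E -> \bar R}.
Proof. refine (pushforward (mu \x mu) merge). exact: mmerge. Defined.

Lemma pmE A : pm A = (mu \x mu) (merge @^-1` A).
Proof. by []. Qed.

Definition cyl (B : E -> set R) : set (vecspace R E) :=
  \bigcap_(e in [set: E]) ((fun z : vecspace R E => z e) @^-1` B e).

Hypothesis ind : indep_delays P tau.

Lemma mu_cyl B : (forall e, measurable (B e)) ->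
  mu (cyl B) = \prod_(e : E) P (tau e @^-1` B e).
Proof.
by move=> mB; rewrite -ind.
Qed.

Lemma mcyl B : (forall e, measurable (B e)) -> measurable (cyl B).
Proof.
move=> mB; apply: fin_bigcap_measurable; first exact: finite_finset.
by move=> e _; have := coord_mfun e measurableT (mB e); rewrite setTI.
Qed.


Definition cyls : set (set (vecspace R E)) :=
  [set A | exists2 B, (forall e, measurable (B e)) & A = cyl B].

Lemma cyls_gen : @measurable _ (vecspace R E) = <<s cyls >>.
Proof.
apply/seteqP; split.
  apply: smallest_sub; first exact: smallest_sigma_algebra.
  move=> _ [i [B mB ->]]; apply: sub_sigma_algebra.
  exists (fun e => if e == i then B else setT).
    by move=> e; case: ifP.
  apply/seteqP; split => z /=.
    by move=> zi e _ /=; case: ifP => // /eqP ->.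
  by move=> /(_ i I) /=; rewrite eqxx.
apply: smallest_sub; first exact: sigma_algebra_measurable.
by move=> _ [B mB ->]; exact: mcyl.
Qed.

Lemma cyls_setI : setI_closed cyls.
Proof.
move=> _ _ [B1 mB1 ->] [B2 mB2 ->]; exists (fun e => B1 e `&` B2 e).
  by move=> e; exact: measurableI.
apply/seteqP; split => z /=.
  by move=> [h1 h2] e _; split; [exact: h1|exact: h2].
by move=> h; split => e _; have [] := h e I.
Qed.

Lemma merge_cyl B : merge @^-1` cyl B =
  cyl (fun e => if e \in E1 adj O Rs then B e else setT) `*`
  cyl (fun e => if e \in E1 adj O Rs then setT else B e).
Proof.
apply/seteqP; split => -[z z'] /=.
  move=> h; split => e _ /=; have := h e I; rewrite /merge /=; by case: ifP.
move=> [h1 h2] e _; rewrite /merge /=; have := h1 e I; have := h2 e I => /=.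
by case: ifP.
Qed.

Lemma P_cond (B : E -> set R) (b : bool) e :
  P (tau e @^-1` (if b then B e else setT)) = if b then P (tau e @^-1` B e) else 1.
Proof. by case: b => //; rewrite preimage_setT probability_setT. Qed.

Lemma mu_merge A : measurable A -> mu A = pm A.
Proof.
apply: (measure_unique cyls (fun _ => setT)).
- exact: cyls_gen.
- exact: cyls_setI.
- move=> _; exists (fun _ => setT) => //.
  by apply/seteqP; split => z //= _ e _.
- by rewrite bigcup_const //; exists 0%N.
- move=> _ [B mB ->]; rewrite pmE merge_cyl product_measure1E; last 2 first.
    by apply: mcyl => e; case: ifP.
    by apply: mcyl => e; case: ifP.
  have mB1 : forall e, measurable (if e \in E1 adj O Rs then B e else setT).
    by move=> e; case: ifP.
  have mB2 : forall e, measurable (if e \in E1 adj O Rs then setT else B e).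
    by move=> e; case: ifP.
  apply: (eq_trans (mu_cyl mB)); apply: esym.
  apply: (eq_trans (congr2 (fun a b => a * b) (mu_cyl mB1) (mu_cyl mB2))).
  rewrite -big_split /=; apply: eq_bigr => e _.
  by case: (e \in E1 adj O Rs); rewrite /= ?preimage_setT ?probability_setT ?mul1e ?mule1.
- by move=> _; apply: (le_lt_trans (probability_le1 mu measurableT)); rewrite ltry.
Qed.


Hypothesis tree : is_tree adj.
Hypothesis hcls : forall r, r \in Rs -> is_class adj O r.
Variable ostar : V.
Hypothesis hostar : ostar \in (\bigcap_(r in Rs) bdry adj O r)%SET.

Definition Psi (s : V) (z : vecspace R E) : vecspace R J :=
  fun j => (\sum_(e in pedges adj s (val j)) z e)%R.
Definition Phi (s : V) (z : vecspace R E) : vecspace R II :=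
  fun i => (\sum_(e in pedges adj s (val i)) z e)%R.

Lemma mPsi s : measurable_fun setT (Psi s).
Proof. by apply: vec_mfun => j; apply: msum => e; exact: coord_mfun. Qed.
Lemma mPhi s : measurable_fun setT (Phi s).
Proof. by apply: vec_mfun => j; apply: msum => e; exact: coord_mfun. Qed.

Variable r0 : {set V}.
Hypothesis r0R : r0 \in Rs.

Lemma bdry_Hs o : o \in bdryR adj O Rs -> o \in Hs adj O Rs.
Proof. by move=> h; rewrite finset.in_setU h orbT. Qed.

Lemma Phi_F s z : s \in Hs adj O Rs -> Phi s z = Ff (Psi s z) z.
Proof.
move=> sH; apply/funext => i; rewrite /Phi /Ff.
have g := piv_good tree hcls hostar r0R (valP i).
have pB : piv adj O Rs (val i) \in bdryR adj O Rs by case/andP: g.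
rewrite insubT /Psi /=.
rewrite (pedges_decomp tree hcls hostar sH g).
rewrite (@eq_bigl _ _ _ _ _ _ [predU pedges adj s (piv adj O Rs (val i)) & pedges adj (piv adj O Rs (val i)) (val i)]); last first.
  by move=> e; rewrite finset.in_setU.
rewrite bigU //.
have h1 := pedges_in tree hcls hostar sH (bdry_Hs pB).
have h2 := pedges_out g.
apply/pred0P => e /=; apply/negbTE/negP => /andP[/(fintype.subsetP h1) e1 e2].
by rewrite (disjointFr h2 e2) in e1.
Qed.

Lemma Psi_merge s z z' : s \in Hs adj O Rs -> Psi s (merge (z, z')) = Psi s z.
Proof.
move=> sH; apply/funext => j; rewrite /Psi; apply: eq_bigr => e he.
have := fintype.subsetP (pedges_in tree hcls hostar sH (bdry_Hs (valP j))) e he.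
by rewrite /merge /= => ->.
Qed.

Lemma F_merge y z z' : Ff y (merge (z, z')) = Ff y z'.
Proof.
apply/funext => i; rewrite /Ff; congr (_ + _)%R; apply: eq_bigr => e he.
have g := piv_good tree hcls hostar r0R (valP i).
by rewrite /merge /= (disjointFr (pedges_out g) he).
Qed.


Lemma main_eq s (A : set (vecspace R II)) (B : set (vecspace R J)) :
  s \in Hs adj O Rs -> measurable A -> measurable B ->
  P (obs_vec tau s O @^-1` A `&` obs_vec tau s (bdryR adj O Rs) @^-1` B) =
  \int[P]_(w in obs_vec tau s (bdryR adj O Rs) @^-1` B)
     Kf (obs_vec tau s (bdryR adj O Rs) w) A.
Proof.
move=> sH mA mB.
set C := Phi s @^-1` A `&` Psi s @^-1` B.
have mC : measurable C.
  apply: measurableI.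
    by have := mPhi s measurableT mA; rewrite setTI.
  by have := mPsi s measurableT mB; rewrite setTI.
have mPB : measurable (Psi s @^-1` B).
  by have := mPsi s measurableT mB; rewrite setTI.
have -> : P (obs_vec tau s O @^-1` A `&` obs_vec tau s (bdryR adj O Rs) @^-1` B) = mu C by [].
rewrite (mu_merge mC) pmE /product_measure1.
have mf : measurable_fun (Psi s @^-1` B) (fun z => Kf (Psi s z) A).
  apply: measurable_funTS.
  exact: measurableT_comp (measurable_kernel Kf A mA) (mPsi s).
have := @ge0_integral_pushforward _ _ Omega (vecspace R E) R Zf mZ P
  (Psi s @^-1` B) (fun z => Kf (Psi s z) A) mPB mf (fun _ _ => measure_ge0 _ _).
move=> <-.
rewrite [RHS]integral_mkcond; apply: eq_integral => z _ /=.
rewrite /patch; case: ifPn => zB.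
  congr (mu _); apply/seteqP; split => z' /=; rewrite /xsection /= in_setE /C /=.
    by rewrite Phi_F ?Psi_merge ?F_merge //; case.
  rewrite Phi_F ?Psi_merge ?F_merge // => h; split => //.
  by move: zB; rewrite in_setE.
rewrite (_ : xsection _ _ = set0); first exact: measure0.
apply/seteqP; split => z' //=; rewrite /xsection /= in_setE /C /=.
move=> [_ h]; move/negP: zB; apply; rewrite in_setE /=.
by rewrite -(Psi_merge z z' sH).
Qed.

End Main.

Close Scope ring_scope.
Unset Implicit Arguments.

Theorem theorem2
  (R : realType) (d : measure_display) (Omega : measurableType d)
  (P : probability Omega R)
  (V : finType) (adj : rel V) (O : {set V})
  (tau : edge adj -> Omega -> R)
  (Rs : {set {set V}}) :
  is_tree adj ->
  O != finset.set0 -> O != finset.setT ->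
  (forall e, measurable_fun setT (tau e)) ->
  (forall e w, (0 <= tau e w)%R) ->
  (forall e (x : R), P (tau e @^-1` [set x]) = 0%E) ->
  indep_delays P tau ->
  (forall r, r \in Rs -> is_class adj O r) ->
  star_arrangement adj O Rs ->
  sufficient P
    [set s : V | s \in unionR Rs]
    (fun s => obs_vec tau s O)
    (fun s => obs_vec tau s (bdryR adj O Rs)).
Proof.
move=> tree _ _ mtau _ _ ind hcls star.
case/set0Pn: star => ostar hostar.
exists (Kf P mtau (O:=O) (Rs:=Rs)) => s /= sR A B mA mB.
have sH : s \in Hs adj O Rs by rewrite finset.in_setU sR.
case/bigcupP: sR => r0 r0R _.
have := (main_eq mtau ind tree hcls hostar r0R sH mA mB).
move=> h; exact h.
Qed.
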